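(* Let $W=W(A_n)$ with generators $s_1,\dots,s_n$ ($s_i$, $s_j$ commuting iff $|i-j|\ge2$, and $s_is_{i+1}s_i=s_{i+1}s_is_{i+1}$). Let $w=s_1s_2\cdots s_{n-1}s_ns_{n-1}\cdots s_2s_1$ (this expression is reduced), and let $x\in W$ be a Coxeter element, i.e. $x=s_{\pi(1)}s_{\pi(2)}\cdots s_{\pi(n)}$ for some permutation $\pi$ of $\{1,\dots,n\}$. Then: (i) $x\le w$; (ii) the Bruhat interval $[x,w]$ is isomorphic, as a poset, to the Boolean lattice of rank $\ell(w)-\ell(x)$; (iii) every $y\in W$ with $x<y\le w$ is not fully commutative.
   Context: $\ell$ is the Coxeter length and $\le$ the Bruhat order on $W$. An element of $W$ is fully commutative if any two of its reduced expressions are related by a sequence of moves $ss'\leftrightarrow s's$ with $s,s'$ commuting generators. *)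

(* Defs.v *)
(* W(A_n) is realised as the symmetric group 'S_(n.+1);
   the generator s_(i+1) (paper's 1-based index) is the adjacent
   transposition gen i = (i, i+1), for i : 'I_n (0-based). *)
From HB Require Import structures.
From mathcomp Require Import all_boot all_order all_fingroup.
From Stdlib Require Import Relations ClassicalEpsilon.
Set Implicit Arguments. Unset Strict Implicit. Unset Printing Implicit Defensive.

Definition gen (n : nat) (i : 'I_n) : 'S_n.+1 :=
  tperm (widen_ord (leqnSn n) i) (lift ord0 i).

Definition weval (n : nat) (t : seq 'I_n) : 'S_n.+1 :=
  foldr (fun i acc => (gen i * acc)%g) 1%g t.

Definition has_expr_of_size (n : nat) (w : 'S_n.+1) (k : nat) : bool :=
  [exists t : k.-tuple 'I_n, weval t == w].

(* Coxeter length: the minimal size of an expression of w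
   (classical case split only to avoid proving generation here). *)
Definition coxlen (n : nat) (w : 'S_n.+1) : nat :=
  match excluded_middle_informative (exists k, has_expr_of_size w k) with
  | left H => ex_minn H
  | right _ => 0
  end.

Definition reduced_expr (n : nat) (w : 'S_n.+1) (t : seq 'I_n) : Prop :=
  weval t = w /\ size t = coxlen w.

Definition reflection (n : nat) (t : 'S_n.+1) : Prop :=
  exists (g : 'S_n.+1) (i : 'I_n), t = (g^-1 * gen i * g)%g.

Definition bruhat_step (n : nat) (u v : 'S_n.+1) : Prop :=
  exists t, reflection t /\ v = (u * t)%g /\ coxlen u < coxlen v.

Definition bruhat (n : nat) (u v : 'S_n.+1) : Prop :=
  clos_refl_trans _ (@bruhat_step n) u v.

Definition comm_move (n : nat) (t1 t2 : seq 'I_n) : Prop :=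
  exists (a b : seq 'I_n) (i j : 'I_n),
    (gen i * gen j = gen j * gen i)%g /\
    t1 = a ++ [:: i; j] ++ b /\ t2 = a ++ [:: j; i] ++ b.

Definition fully_commutative (n : nat) (y : 'S_n.+1) : Prop :=
  forall t1 t2, reduced_expr y t1 -> reduced_expr y t2 ->
    clos_refl_trans _ (@comm_move n) t1 t2.

(* the word s_1 s_2 ... s_(n-1) s_n s_(n-1) ... s_2 s_1 *)
Definition wword (n : nat) : seq 'I_n :=
  enum 'I_n ++ behead (rev (enum 'I_n)).

Definition interval_boolean (n : nat) (x w : 'S_n.+1) (r : nat) : Prop :=
  exists f : 'S_n.+1 -> {set 'I_r},
    (forall A : {set 'I_r}, exists y, [/\ bruhat x y, bruhat y w & f y = A]) /\
    (forall y z, bruhat x y -> bruhat y w -> bruhat x z -> bruhat z w ->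
       f y = f z -> y = z) /\
    (forall y z, bruhat x y -> bruhat y w -> bruhat x z -> bruhat z w ->
       (bruhat y z <-> f y \subset f z)).

(* Main.v *)
Require Import Defs.
From HB Require Import structures.
From mathcomp Require Import all_boot all_order all_fingroup.
From mathcomp Require Import zify.
From Stdlib Require Import Relations ClassicalEpsilon.
Set Implicit Arguments. Unset Strict Implicit. Unset Printing Implicit Defensive.


Ltac ordnat :=
  repeat match goal with
  | H : is_true (?a != ?b) |- _ =>
      let H' := fresh in
      (have H' : (nat_of_ord a != nat_of_ord b) by rewrite (inj_eq val_inj)); clear H
  | H : ?a <> ?b |- _ => let H' := fresh in (have H' : (nat_of_ord a <> nat_of_ord b) by move/val_inj); clear H
  end.

Ltac elim_ifs := repeat match goal with
 | |- context [if ?c then _ else _] =>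
    lazymatch c with context [if _ then _ else _] => fail | _ => let H := fresh "Hif" in destruct c eqn:H end
 end.

Ltac tcase p q z :=
  case: (eqVneq z p) => [?|?];
  [subst z; rewrite ?tpermL
  | case: (eqVneq z q) => [?|?];
    [subst z; rewrite ?tpermR
    | rewrite ?(@tpermD _ p q z) ?(eq_sym p) ?(eq_sym q) //]].

Lemma tpermE' (T : finType) (x y z : T) :
  tperm x y z = if z == x then y else if z == y then x else z.
Proof. by case: tpermP => [->|->|/eqP/negbTE-> /eqP/negbTE->]; rewrite ?eqxx //; case: eqP => // ->. Qed.

Lemma gen_val (n : nat) (i : 'I_n) (z : 'I_n.+1) :
  (gen i z : nat) = if (z : nat) == (i : nat) then (i : nat).+1
                  else if (z : nat) == (i : nat).+1 then (i : nat) else (z : nat).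
Proof.
rewrite /gen tpermE'.
have e1 : (z == widen_ord (leqnSn n) i) = ((z : nat) == (i : nat)) by [].
have e2 : (z == lift ord0 i) = ((z : nat) == (i : nat).+1) by [].
rewrite e1 e2; case: eqP => //= _; case: eqP => //.
Qed.

Lemma weval_cons (n : nat) (i : 'I_n) t : weval (i :: t) = (gen i * weval t)%g.
Proof. by []. Qed.

Lemma weval_cat (n : nat) (s t : seq 'I_n) : weval (s ++ t) = (weval s * weval t)%g.
Proof. elim: s => [|i s IH] /=; first by rewrite mul1g. by rewrite IH mulgA. Qed.

Lemma genK (n : nat) (i : 'I_n) : (gen i * gen i)%g = 1%g.
Proof. by rewrite /gen tperm2. Qed.

Definition invs (n : nat) (u : 'S_n.+1) : {set 'I_n.+1 * 'I_n.+1} :=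
  [set ij : 'I_n.+1 * 'I_n.+1 | ((ij.1 : nat) < ij.2) && ((u ij.2 : nat) < u ij.1)].
Definition ninv (n : nat) (u : 'S_n.+1) := #|invs u|.

Lemma in_invs n (u : 'S_n.+1) a b :
  ((a, b) \in invs u) = ((a : nat) < b) && ((u b : nat) < u a).
Proof. by rewrite inE. Qed.

Lemma inv_swap_lt n (u : 'S_n.+1) (p q : 'I_n.+1) :
  (p : nat) < q -> (u p : nat) < u q -> ninv u < ninv (tperm p q * u)%g.
Proof.
move=> hpq hu.
set v := (tperm p q * u)%g.
have hv z : v z = u (tperm p q z) by rewrite permM.
pose bt (z : 'I_n.+1) := ((p : nat) < z) && ((z : nat) < q).
pose phi (ij : 'I_n.+1 * 'I_n.+1) :=
  if bt ij.1 || bt ij.2 then ij else (tperm p q ij.1, tperm p q ij.2).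
have btt z : bt (tperm p q z) = bt z.
  rewrite /bt; tcase p q z; lia.
have phiK : involutive phi.
  move=> [a b]; rewrite /phi /=; case hb: (bt a || bt b) => /=; first by rewrite hb.
  by rewrite !btt hb !tpermK.
have sub : phi @: invs u \subset invs v.
  apply/subsetP => _ /imsetP [[a b] hab ->].
  rewrite in_invs in hab; move/andP: hab => [h1 h2].
  rewrite /phi /=; case: ifP => hb.
    rewrite in_invs !hv; rewrite /bt in hb.
    tcase p q a; tcase p q b; ordnat; lia.
  rewrite in_invs !hv !tpermK; rewrite /bt in hb.
  tcase p q a; tcase p q b; ordnat; lia.
have pq_in : (p, q) \in invs v by rewrite in_invs !hv tpermL tpermR hpq hu.
have pq_out : (p, q) \notin phi @: invs u.
  apply/negP => /imsetP [[a b] hab e].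
  have e' : (a, b) = phi (p, q) by rewrite e phiK.
  move: e'; rewrite /phi /bt /= tpermL tpermR; case: ifP; first lia.
  move=> _ [ea eb]; subst a b; rewrite in_invs in hab; lia.
rewrite /ninv -(card_imset _ (can_inj phiK)); apply: proper_card.
rewrite properE sub /=; apply/subsetPn; by exists (p, q).
Qed.


Lemma genE_tperm n (i : 'I_n) : gen i = tperm (widen_ord (leqnSn n) i) (lift ord0 i).
Proof. by []. Qed.

Lemma inv_adj n (u : 'S_n.+1) (i : 'I_n) :
  (u (widen_ord (leqnSn n) i) : nat) < u (lift ord0 i) ->
  ninv (gen i * u)%g = (ninv u).+1.
Proof.
set p := widen_ord (leqnSn n) i; set q := lift ord0 i => hu.
have hp : (p : nat) = i by [].
have hq : (q : nat) = (i : nat).+1 by rewrite /q /= /bump leq0n.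
apply/eqP; rewrite eqn_leq; apply/andP; split; last first.
  by rewrite genE_tperm; apply: inv_swap_lt => //; rewrite hp hq.
set v := (gen i * u)%g.
have hv z : v z = u (tperm p q z) by rewrite permM.
pose psi (ij : 'I_n.+1 * 'I_n.+1) := (tperm p q ij.1, tperm p q ij.2).
have psiK : involutive psi by move=> [a b]; rewrite /psi /= !tpermK.
have sub : psi @: (invs v :\ (p, q)) \subset invs u.
  apply/subsetP => _ /imsetP [[a b] /setD1P [hne hab] ->].
  rewrite in_invs !hv in hab; rewrite in_invs /psi /=.
  rewrite xpair_eqE in hne.
  move: hne hab; tcase p q a; tcase p q b; rewrite ?eqxx => hne hab; ordnat; lia.
have := subset_leq_card sub; rewrite card_imset; last exact: can_inj psiK.
move=> h; rewrite /ninv (cardsD1 (p, q) (invs v)); have := leq_b1 ((p,q) \in invs v).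
move: h; case: ((p, q) \in invs v) => /= h _; first by rewrite add1n ltnS.
by rewrite add0n; apply: leqW.
Qed.

Lemma inv_gen_le n (u : 'S_n.+1) (i : 'I_n) :
  ninv (gen i * u)%g <= (ninv u).+1 /\ ninv u <= (ninv (gen i * u)%g).+1.
Proof.
set p := widen_ord (leqnSn n) i; set q := lift ord0 i.
have hpq : p != q by rewrite -(inj_eq val_inj) /= /bump leq0n; lia.
have : u p != u q by rewrite (inj_eq perm_inj).
rewrite -(inj_eq val_inj) neq_ltn => /orP [h|h].
  by rewrite inv_adj //; lia.
have h' : (((gen i) * u)%g p : nat) < (gen i * u)%g q.
  by rewrite !permM /gen tpermL tpermR.
have := inv_adj h'; rewrite mulgA genK mul1g; lia.
Qed.

Lemma inv_weval n (t : seq 'I_n) : ninv (weval t) <= size t.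
Proof.
elim: t => [|i t IH] /=.
  rewrite leqn0 /ninv cards_eq0; apply/eqP/setP => -[a b].
  by rewrite in_invs !perm1 inE; lia.
have [h _] := inv_gen_le (weval t) i; lia.
Qed.

Lemma incr_ge n (f : 'I_n.+1 -> 'I_n.+1) :
  (forall a b : 'I_n.+1, (a : nat) < b -> (f a : nat) < f b) ->
  forall z : 'I_n.+1, (z : nat) <= f z.
Proof.
move=> hf z; have [k hk] : exists k, (z : nat) = k by eexists.
elim: k z hk => [|k IH] z hk; first lia.
have hk' : k < n.+1 by have := ltn_ord z; lia.
have := IH (Ordinal hk') erefl; have := hf (Ordinal hk') z; rewrite /=; lia.
Qed.

Lemma inv0 n (u : 'S_n.+1) : ninv u = 0 -> u = 1%g.
Proof.
move=> /eqP; rewrite cards_eq0 => /eqP h0.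
have noinv (a b : 'I_n.+1) : (a : nat) < b -> (u a : nat) < u b.
  move=> hab; have : (a, b) \notin invs u by rewrite h0 inE.
  rewrite in_invs hab /= -leqNgt leq_eqVlt => /orP [/eqP e|//].
  have /perm_inj eab : u a = u b by apply: val_inj.
  by rewrite eab in hab; lia.
have g1 := incr_ge noinv.
have noinv' (a b : 'I_n.+1) : (a : nat) < b -> ((u^-1)%g a : nat) < (u^-1)%g b.
  move=> hab; have : (u^-1)%g a != (u^-1)%g b.
    by rewrite (inj_eq perm_inj) -(inj_eq val_inj) /=; lia.
  rewrite -(inj_eq val_inj) neq_ltn => /orP [//|h].
  have := noinv _ _ h; rewrite !permKV; lia.
have g2 := incr_ge noinv'.
apply/permP => z; apply: ord_inj; rewrite perm1.
have := g1 z; have := g2 (u z); rewrite permK; lia.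
Qed.

Lemma descent n (u : 'S_n.+1) : 0 < ninv u ->
  exists i : 'I_n, (u (lift ord0 i) : nat) < u (widen_ord (leqnSn n) i).
Proof.
rewrite /ninv card_gt0 => /set0Pn [[a b]]; rewrite in_invs => /andP [hab hu].
have [k hk] : exists k, (b : nat) - a = k by eexists.
elim: k a b hk hab hu => [|k IH] a b hk hab hu; first lia.
have ha : (a : nat) < n by have := ltn_ord b; lia.
have hc : (a : nat).+1 < n.+1 by lia.
have ew : widen_ord (leqnSn n) (Ordinal ha) = a by apply: ord_inj.
have el : lift ord0 (Ordinal ha) = Ordinal hc by apply: ord_inj; rewrite /= /bump leq0n.
have : u (Ordinal hc) != u a.
  by rewrite (inj_eq perm_inj) -(inj_eq (@ord_inj _)) /=; lia.
rewrite -(inj_eq (@ord_inj _)) neq_ltn => /orP [h|h].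
  by exists (Ordinal ha); rewrite ew el.
case: (eqVneq (Ordinal hc) b) => [e|ne].
  by rewrite e in h; lia.
apply: (IH (Ordinal hc) b); ordnat.
all: simpl in *; lia.
Qed.

Lemma expr_inv n (u : 'S_n.+1) : exists t, weval t = u /\ size t = ninv u.
Proof.
have [k hk] : exists k, ninv u = k by eexists.
elim: k u hk => [|k IH] u hk.
  by exists [::]; split; [rewrite (inv0 hk) | rewrite hk].
have [i hi] : exists i : 'I_n, (u (lift ord0 i) : nat) < u (widen_ord (leqnSn n) i) by apply: descent; rewrite hk.
set u' := (gen i * u)%g.
have h' : (u' (widen_ord (leqnSn n) i) : nat) < u' (lift ord0 i).
  by rewrite !permM /gen tpermL tpermR.
have e := inv_adj h'.
have eu : (gen i * u')%g = u by rewrite mulgA genK mul1g.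
rewrite eu hk in e.
have e' : ninv u' = k by case: e.
have [t [ht hs]] := IH u' e'.
by exists (i :: t); rewrite weval_cons ht eu /= hs e'.
Qed.

Lemma coxlenE n (u : 'S_n.+1) : coxlen u = ninv u.
Proof.
have [t [ht hs]] := expr_inv u.
have hex : has_expr_of_size u (ninv u).
  apply/existsP; exists (@Tuple _ _ t (introT eqP hs)); by rewrite /= ht.
rewrite /coxlen; case: excluded_middle_informative => [H|H]; last first.
  by exfalso; apply: H; exists (ninv u).
case: ex_minnP => m hm hmin.
apply/eqP; rewrite eqn_leq (hmin _ hex) /=.
move/existsP: hm => [t' /eqP <-]; have := inv_weval t'; by rewrite size_tuple.
Qed.

Lemma coxlen_le n (u : 'S_n.+1) (t : seq 'I_n) : weval t = u -> coxlen u <= size t.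
Proof. by move=> <-; rewrite coxlenE inv_weval. Qed.


Lemma refl_tperm n (t : 'S_n.+1) : reflection t ->
  exists a b : 'I_n.+1, a != b /\ t = tperm a b.
Proof.
move=> [g [i ->]].
exists (g (widen_ord (leqnSn n) i)), (g (lift ord0 i)); split.
  by rewrite (inj_eq perm_inj) -(inj_eq (@ord_inj _)) /= /bump leq0n; lia.
by rewrite -tpermJ conjgE mulgA.
Qed.

Lemma val_swap n (u : 'S_n.+1) a b :
  (u * tperm a b)%g = (tperm ((u^-1)%g a) ((u^-1)%g b) * u)%g.
Proof. by rewrite -tpermJ conjgE invgK !mulgA mulgKV. Qed.

Lemma step_pos n (u v : 'S_n.+1) : bruhat_step u v ->
  exists p q : 'I_n.+1, [/\ (p : nat) < q, (u p : nat) < u q & v = (tperm p q * u)%g].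
Proof.
move=> [t [/refl_tperm [a [b [hab ->]]] [-> hl]]].
rewrite val_swap in hl *.
set p0 := (u^-1)%g a; set q0 := (u^-1)%g b.
have hpq : p0 != q0 by rewrite (inj_eq perm_inj).
have key : forall p q : 'I_n.+1, (p : nat) < q -> coxlen u < coxlen (tperm p q * u)%g ->
    exists p' q' : 'I_n.+1, [/\ (p' : nat) < q', (u p' : nat) < u q' & (tperm p q * u)%g = (tperm p' q' * u)%g].
  move=> p q hpq' hl'; exists p, q; split => //.
  have : u p != u q by rewrite (inj_eq perm_inj) -(inj_eq (@ord_inj _)) /=; lia.
  rewrite -(inj_eq (@ord_inj _)) neq_ltn => /orP [//|h].
  set w := (tperm p q * u)%g.
  have hw : (w p : nat) < w q by rewrite !permM tpermL tpermR.
  have ew : (tperm p q * w)%g = u by rewrite /w mulgA tperm2 mul1g.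
  have h2 : ninv w < ninv u by rewrite -[in X in _ < X]ew; exact: inv_swap_lt hw.
  move: h2.
  rewrite !coxlenE -/w in hl'; lia.
move: hpq; rewrite -(inj_eq (@ord_inj _)) neq_ltn => /orP [h|h].
  exact: key.
by rewrite tpermC; apply: key => //; rewrite tpermC.
Qed.

Definition Dset n (u : 'S_n.+1) (i : nat) : {set 'I_n.+1} :=
  [set z : 'I_n.+1 | ((z : nat) <= i) && (i < u z)].
Definition D n (u : 'S_n.+1) i := #|Dset u i|.

Lemma in_Dset n (u : 'S_n.+1) i z : (z \in Dset u i) = ((z : nat) <= i) && (i < u z).
Proof. by rewrite inE. Qed.

Lemma D_swap n (u : 'S_n.+1) (p q : 'I_n.+1) i :
  (p : nat) < q -> (u p : nat) < u q ->
  D u i <= D (tperm p q * u)%g i /\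
  D (tperm p q * u)%g i <= D u i + [&& (p : nat) <= i, i < q, (u p : nat) <= i & i < u q].
Proof.
move=> hpq hu; set v := (tperm p q * u)%g.
have hv z : v z = u (tperm p q z) by rewrite permM.
case: (boolP (((p : nat) <= i) && (i < q))) => hin.
  have s1 : Dset u i \subset Dset v i.
    apply/subsetP => z; rewrite !in_Dset hv; tcase p q z; ordnat; lia.
  have s2 : Dset v i \subset p |: Dset u i.
    apply/subsetP => z; rewrite in_setU1 !in_Dset hv; tcase p q z; rewrite ?eqxx //; ordnat; lia.
  split; first exact: subset_leq_card.
  case: (boolP [&& (p : nat) <= i, i < q, (u p : nat) <= i & i < u q]) => hb.
    have := subset_leq_card s2; rewrite cardsU1 /D; case: (p \in _) => /=; lia.
  have s3 : Dset v i \subset Dset u i.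
    apply/subsetP => z zv; have := subsetP s2 z zv; rewrite in_setU1 => /orP [/eqP e|//].
    move: zv hb; rewrite e !in_Dset hv tpermL; lia.
  have := subset_leq_card s3; rewrite /D; lia.
have e : Dset v i = tperm p q @^-1: Dset u i.
  apply/setP => z; rewrite !inE hv; tcase p q z; ordnat; lia.
rewrite /D e card_preimset; last exact: perm_inj.
lia.
Qed.

Lemma D_step n (u v : 'S_n.+1) i : bruhat_step u v -> D u i <= D v i.
Proof.
move=> /step_pos [p [q [hpq hu ->]]]; by have [] := D_swap i hpq hu.
Qed.

Lemma D_bruhat n (u v : 'S_n.+1) i : bruhat u v -> D u i <= D v i.
Proof.
elim=> [x y /D_step //| x //| x y z _ h1 _ h2]; exact: leq_trans h1 h2.
Qed.


Lemma weval_rcons n (t : seq 'I_n) i : weval (rcons t i) = (weval t * gen i)%g.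
Proof. by rewrite -cats1 weval_cat /= mulg1. Qed.

Lemma weval_asc n (t : seq 'I_n) m k : map val t = iota m k -> forall z : 'I_n.+1,
  (weval t z : nat) = if (z : nat) == m then m + k
                      else if (m < z) && (z <= m + k) then (z : nat) - 1 else z.
Proof.
elim: k m t => [|k IH] m [|i t] //=.
- by move=> _ z; rewrite perm1; case: eqP => [->|]; rewrite ?addn0 //; case: ifP => //; lia.
- case=> hi ht z; rewrite permM (IH _ _ ht) gen_val.
  have hi' : (i : nat) = m by [].
  rewrite hi'; elim_ifs; lia.
Qed.

Lemma weval_desc n (t : seq 'I_n) m k : map val t = rev (iota m k) -> forall z : 'I_n.+1,
  (weval t z : nat) = if (z : nat) == m + k then m
                      else if (m <= z) && (z < m + k) then (z : nat).+1 else z.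
Proof.
elim: k m t => [|k IH] m t.
  case: t => [_ z|//]; rewrite /= perm1 addn0; elim_ifs; lia.
case/lastP: t => [|t i]; first by rewrite /= rev_cons; case: (rev _).
rewrite map_rcons /= rev_cons => /eqP; rewrite eqseq_rcons => /andP [/eqP ht /eqP hi] z.
rewrite weval_rcons permM gen_val (IH _ _ ht).
have hi' : (i : nat) = m by [].
rewrite hi'; elim_ifs; lia.
Qed.

Lemma wword_tperm n : 0 < n ->
  weval (wword n) = tperm (ord0 : 'I_n.+1) ord_max.
Proof.
case: n => // n _; apply/permP => z; apply: ord_inj.
rewrite /wword weval_cat permM.
have h1 : map val (enum 'I_n.+1) = iota 0 n.+1 by rewrite val_enum_ord.
have h2 : map val (behead (rev (enum 'I_n.+1))) = rev (iota 0 n).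
  by rewrite -behead_map map_rev h1 -addn1 iotaD rev_cat.
rewrite (weval_desc h2) (weval_asc h1) tpermE'.
have e0 : (z == ord0) = ((z : nat) == 0) by [].
have e1 : (z == ord_max) = ((z : nat) == n.+1) by [].
rewrite e0 e1; have := ltn_ord z; elim_ifs; rewrite /=; lia.
Qed.

Lemma weval_stab n (t : seq 'I_n) (i : 'I_n) : i \notin t -> forall z : 'I_n.+1,
  ((weval t z : nat) <= i) = ((z : nat) <= i).
Proof.
elim: t => [|j t IH] /=; first by move=> _ z; rewrite perm1.
rewrite in_cons negb_or => /andP [hij hi] z; rewrite permM IH // gen_val.
ordnat; elim_ifs; lia.
Qed.

Lemma weval_fix n (t : seq 'I_n) (z : 'I_n.+1) :
  (forall j, j \in t -> ((j : nat) != z) && ((j : nat).+1 != z)) -> weval t z = z.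
Proof.
elim: t => [|j t IH] h /=; first by rewrite perm1.
rewrite permM.
have -> : gen j z = z.
  apply: ord_inj; rewrite gen_val; have := h j (mem_head _ _); elim_ifs; lia.
by apply: IH => c hc; apply: h; rewrite in_cons hc orbT.
Qed.

Lemma uniq_split (T : eqType) (t : seq T) i : uniq t -> i \in t ->
  exists t1 t2, [/\ t = t1 ++ i :: t2, i \notin t1 & i \notin t2].
Proof.
move=> hu hin; case/splitPr: hin hu => t1 t2 hu; exists t1, t2; split => //.
  move: hu; rewrite cat_uniq => /and3P [_ /hasPn h _].
  by have := h i (mem_head _ _).
by move: hu; rewrite cat_uniq => /and3P [_ _]; rewrite cons_uniq => /andP [].
Qed.

Lemma D_word n (t : seq 'I_n) (i : 'I_n) : uniq t -> i \in t -> D (weval t) i = 1.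
Proof.
move=> hu hin; have [t1 [t2 [-> h1 h2]]] := uniq_split hu hin.
rewrite weval_cat weval_cons; set P := weval t1; set Q := weval t2.
rewrite /D (_ : Dset _ _ = [set (P^-1)%g (widen_ord (leqnSn n) i)]) ?cards1 //.
apply/setP => z; rewrite in_Dset in_set1 !permM.
have -> : (z == (P^-1)%g (widen_ord (leqnSn n) i)) = ((P z : nat) == i).
  apply/eqP/eqP => [->|e]; first by rewrite permKV.
  by apply: (@perm_inj _ P); rewrite permKV; apply: ord_inj.
rewrite ltnNge (weval_stab h2) -(weval_stab h1 z) gen_val -/P.
elim_ifs; lia.
Qed.

Lemma D_word0 n (t : seq 'I_n) (i : 'I_n) : i \notin t -> D (weval t) i = 0.
Proof.
move=> hi; apply/eqP; rewrite cards_eq0; apply/eqP/setP => z.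
rewrite in_Dset inE ltnNge (weval_stab hi); lia.
Qed.

Lemma fix_word n (t : seq 'I_n) : 0 < n -> uniq t -> (forall j, j \in t) ->
  forall z : 'I_n.+1, weval t z != z.
Proof.
move=> hn hu hall z.
pose adj (j : 'I_n) := ((j : nat) == z) || ((j : nat).+1 == z).
have j0 : 'I_n := Ordinal hn.
have hhas : has adj t.
  have hz := ltn_ord z.
  case: (ltnP z n) => hzn.
    by apply/hasP; exists (Ordinal hzn) => //; rewrite /adj /= eqxx.
  have hn1 : n.-1 < n by lia.
  by apply/hasP; exists (Ordinal hn1) => //; rewrite /adj /=; lia.
set k := find adj t.
have hk : k < size t by rewrite -has_find.
have ht : t = take k t ++ nth j0 t k :: drop k.+1 t by rewrite -drop_nth // cat_take_drop.
set j := nth j0 t k.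
have hj : adj j by apply: nth_find.
have htk : ~~ has adj (take k t) by rewrite has_take // ltnn.
have hjn : j \notin drop k.+1 t.
  move: hu; rewrite {1}ht cat_uniq => /and3P [_ _]; rewrite cons_uniq => /andP [] //.
rewrite ht weval_cat weval_cons !permM -/j.
rewrite (@weval_fix _ (take k t) z); last first.
  move=> c hc; have := hasPn htk c hc; rewrite /adj; lia.
have hs := weval_stab hjn (gen j z).
rewrite -(inj_eq (@ord_inj _)); move: hs hj; rewrite gen_val /adj.
elim_ifs; lia.
Qed.


Definition Dgood n (u : 'S_n.+1) := forall i, i < n -> D u i = 1.
Definition rmv n (u : 'S_n.+1) k := (u * tperm k (u k))%g.
Definition Fix n (u : 'S_n.+1) : {set 'I_n.+1} := [set z | u z == z].
Definition Mid n : {set 'I_n.+1} := [set z : 'I_n.+1 | (0 < (z : nat)) && ((z : nat) < n)].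

Lemma card_ge2 (T : finType) (S : {set T}) a b : a \in S -> b \in S -> a != b -> 1 < #|S|.
Proof.
move=> ha hb hab; have : [set a; b] \subset S.
  by apply/subsetP => z; rewrite !inE => /orP [/eqP->|/eqP->].
by move/subset_leq_card; rewrite cards2 hab.
Qed.

Lemma Dg_uniq n (u : 'S_n.+1) i z z' : Dgood u -> i < n ->
  z \in Dset u i -> z' \in Dset u i -> z = z'.
Proof.
move=> hg hi hz hz'; apply/eqP; apply/negP => /negP ne.
by have := card_ge2 hz hz' ne; rewrite -/(D u i) hg.
Qed.

Lemma Dg_ex n (u : 'S_n.+1) i : Dgood u -> i < n ->
  exists z : 'I_n.+1, ((z : nat) <= i) && (i < u z).
Proof.
move=> hg hi; have : 0 < D u i by rewrite hg.
rewrite /D card_gt0 => /set0Pn [z]; rewrite in_Dset => h; by exists z.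
Qed.

Lemma in_Fix n (u : 'S_n.+1) z : (z \in Fix u) = (u z == z).
Proof. by rewrite inE. Qed.

Lemma in_Mid n z : (z \in Mid n) = (0 < (z : nat)) && ((z : nat) < n).
Proof. by rewrite inE. Qed.

Lemma Dg_fix n (u : 'S_n.+1) z : 0 < n -> Dgood u -> u z = z -> (0 < (z : nat)) && ((z : nat) < n).
Proof.
move=> hn0 hg hz; have hzn := ltn_ord z; apply/andP; split.
  case: (posnP z) => // z0.
  have [p /andP [hp1 hp2]] := Dg_ex hg hn0.
  have ep : p = z by apply: ord_inj; lia.
  by rewrite ep hz in hp2; lia.
case: (ltnP z n) => // hzn'.
have h0 : n.-1 < n by lia.
have [p /andP [hp1 hp2]] := Dg_ex hg h0.
have /perm_inj ep : u p = u z by apply: ord_inj; rewrite hz; have := ltn_ord (u p); lia.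
by rewrite ep in hp1; lia.
Qed.

Lemma NoTwo n (u : 'S_n.+1) (a b : 'I_n.+1) : Dgood u -> (a : nat) < b -> u a = b -> u b = a ->
  (a : nat) = 0 /\ (b : nat) = n.
Proof.
move=> hg hab hua hub.
have hbn := ltn_ord b.
have ha0 : (a : nat) = 0.
  case: (posnP a) => // ha.
  have han : (a : nat) < n by lia.
  have ina : a \in Dset u a by rewrite in_Dset hua; lia.
  have h1 : (a : nat).-1 < n by lia.
  have [p /andP [hp1 hp2]] := Dg_ex hg h1.
  have hpa : u p != a by rewrite -hub (inj_eq perm_inj) -(inj_eq (@ord_inj _)); lia.
  have inp : p \in Dset u a by rewrite in_Dset; ordnat; lia.
  have := Dg_uniq hg han ina inp; move/(f_equal (@nat_of_ord _)); lia.
split => //.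
case: (ltnP b n) => hb; last lia.
have [p /andP [hp1 hp2]] := Dg_ex hg hb.
have hp0 : p != a by apply/negP => /eqP e; rewrite e hua in hp2; lia.
have hpb : p != b by apply/negP => /eqP e; rewrite e hub in hp2; lia.
have h1 : (b : nat).-1 < n by lia.
have in0 : a \in Dset u (b : nat).-1 by rewrite in_Dset hua; lia.
have inp : p \in Dset u (b : nat).-1 by rewrite in_Dset; ordnat; lia.
have := Dg_uniq hg h1 in0 inp; move/(f_equal (@nat_of_ord _)); ordnat; lia.
Qed.

Lemma LM n (y : 'S_n.+1) (k c : 'I_n.+1) : Dgood y -> 0 < (k : nat) < n ->
  y c = k -> y k != k ->
  ((c : nat) < k /\ (k : nat) < y k) \/ ((k : nat) < c /\ (y k : nat) < k).
Proof.
move=> hg hk hc hyk.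
have hck : c != k by apply/negP => /eqP e; rewrite e in hc; by rewrite hc eqxx in hyk.
ordnat.
case: (ltngtP c k) => h1; last lia.
- case: (ltngtP k (y k)) => h2; [by left | | lia].
  (* c < k, y k < k : local max *)
  exfalso.
  have hk1 : (k : nat) < n by lia.
  have [p /andP [hp1 hp2]] := Dg_ex hg hk1.
  have hpk : p != k by apply/negP => /eqP e; rewrite e in hp2; lia.
  have hpc : p != c by apply/negP => /eqP e; rewrite e hc in hp2; lia.
  have h3 : (k : nat).-1 < n by lia.
  have inc : c \in Dset y (k : nat).-1 by rewrite in_Dset hc; lia.
  have inp : p \in Dset y (k : nat).-1 by rewrite in_Dset; ordnat; lia.
  have := Dg_uniq hg h3 inc inp; move/(f_equal (@nat_of_ord _)); ordnat; lia.
- case: (ltngtP k (y k)) => h2; [ | by right | lia].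
  (* k < c, k < y k : local min *)
  exfalso.
  have h3 : (k : nat).-1 < n by lia.
  have [p /andP [hp1 hp2]] := Dg_ex hg h3.
  have hpc : y p != k by rewrite -hc (inj_eq perm_inj) -(inj_eq (@ord_inj _)); lia.
  have hk1 : (k : nat) < n by lia.
  have ink : k \in Dset y k by rewrite in_Dset; lia.
  have inp : p \in Dset y k by rewrite in_Dset; ordnat; lia.
  have := Dg_uniq hg hk1 ink inp; move/(f_equal (@nat_of_ord _)); lia.
Qed.

Lemma remE n (y : 'S_n.+1) k : rmv y k = (tperm ((y^-1)%g k) k * y)%g.
Proof. by rewrite /rmv val_swap permK. Qed.

Lemma lemR n (y : 'S_n.+1) (k : 'I_n.+1) : Dgood y -> 0 < (k : nat) < n -> y k != k ->
  ninv y < ninv (rmv y k) /\ Dgood (rmv y k).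
Proof.
move=> hg hk hyk; set c := (y^-1)%g k.
have hc : y c = k by rewrite permKV.
rewrite remE -/c.
case: (LM hg hk hc hyk) => [[h1 h2]|[h1 h2]].
  have hu : (y c : nat) < y k by rewrite hc.
  split; first exact: inv_swap_lt.
  move=> i hi; have [d1 d2] := D_swap i h1 hu; move: d1 d2; rewrite hg // hc.
  have -> : [&& (c : nat) <= i, i < k, (k : nat) <= i & i < y k] = false by lia.
  by move=> d1 d2; apply/eqP; rewrite eqn_leq d1 -(addn0 1) d2.
rewrite tpermC.
have hu : (y k : nat) < y c by rewrite hc.
split; first exact: inv_swap_lt.
move=> i hi; have [d1 d2] := D_swap i h1 hu; move: d1 d2; rewrite hg // hc.
have -> : [&& (k : nat) <= i, i < c, (y k : nat) <= i & i < k] = false by lia.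
by move=> d1 d2; apply/eqP; rewrite eqn_leq d1 -(addn0 1) d2.
Qed.

Lemma FixRem n (y : 'S_n.+1) (k : 'I_n.+1) : Dgood y -> 0 < (k : nat) < n -> y k != k ->
  Fix (rmv y k) = k |: Fix y.
Proof.
move=> hg hk hyk; apply/setP => z; rewrite in_setU1 !in_Fix /rmv permM.
case: (eqVneq z k) => [->|hzk] /=; first by rewrite tpermR eqxx.
case: (eqVneq (y z) z) => [e|ne].
  have hz2 : y k != z.
    apply/negP => /eqP e2; have : y k = y z by rewrite e2 e.
    by move/perm_inj => e3; rewrite e3 eqxx in hzk.
  by rewrite e tpermD ?eqxx // eq_sym.
rewrite tpermE'; case: (eqVneq (y z) k) => [e|ne2].
  case: (eqVneq (y k) z) => [e2|//]; exfalso.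
  case: (ltngtP k z) => h.
  - have := NoTwo hg h e2 e; lia.
  - have := NoTwo hg h e e2; lia.
  - by move/ord_inj: h => h; rewrite h eqxx in hzk.
case: (eqVneq (y z) (y k)) => [/perm_inj e|_]; first by rewrite e eqxx in hzk.
by rewrite (negbTE ne).
Qed.

Lemma tperm_refl n (hn : 0 < n) (a b : 'I_n.+1) : a != b -> reflection (tperm a b).
Proof.
move=> hab.
set i0 : 'I_n := Ordinal hn.
set o1 : 'I_n.+1 := lift ord0 i0.
set s := tperm (widen_ord (leqnSn n) i0) a.
set g := (s * tperm (s o1) b)%g.
exists g, i0.
have w0 : widen_ord (leqnSn n) i0 != o1 by rewrite -(inj_eq (@ord_inj _)) /= /bump; lia.
have g0 : g (widen_ord (leqnSn n) i0) = a.
  rewrite permM /s tpermL tpermD //.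
  apply/negP => /eqP e; have : s o1 = s (widen_ord (leqnSn n) i0) by rewrite /s tpermL.
  by move/perm_inj => e'; rewrite e' eqxx in w0.
  by rewrite eq_sym.
have g1 : g o1 = b by rewrite permM tpermL.
by rewrite -mulgA -conjgE genE_tperm tpermJ g0 -/o1 g1.
Qed.

Lemma card_Mid n : 0 < n -> #|Mid n| = n.-1.
Proof.
move=> hn.
have e : Mid n = ~: [set ord0; ord_max].
  apply/setP => z; rewrite in_Mid !inE -!(inj_eq (@ord_inj _)) /=; have := ltn_ord z; lia.
have := cardsC [set (ord0 : 'I_n.+1); ord_max].
rewrite -e cards2 card_ord -(inj_eq (@ord_inj _)) /=.
have -> : (0 == n) = false by lia.
move=> h; have h2 : #|Mid n| + 2 = n.+1 by rewrite addnC; exact: h.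
apply/eqP; rewrite -(eqn_add2r 2) h2; lia.
Qed.

Definition W n : 'S_n.+1 := tperm ord0 ord_max.

Lemma Dg_W n : Dgood (W n).
Proof.
move=> i hi; rewrite /D (_ : Dset _ _ = [set ord0]) ?cards1 //.
apply/setP => z; rewrite in_Dset in_set1 /W tpermE' -!(inj_eq (@ord_inj _)) /=.
have := ltn_ord z; elim_ifs; rewrite /=; lia.
Qed.

Lemma Dgood_W_eq n (u : 'S_n.+1) : 0 < n -> Dgood u -> Mid n \subset Fix u -> u = W n.
Proof.
move=> hn hg hs.
have hfix (z : 'I_n.+1) : 0 < (z : nat) < n -> u z = z.
  by move=> hz; apply/eqP; rewrite -in_Fix; apply: (subsetP hs); rewrite in_Mid.
have key (z : 'I_n.+1) : ~~ (0 < (z : nat) < n) -> (u z : nat) = n - z.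
  move=> hz.
  have h1 : u z != z by apply/negP => /eqP e; have := Dg_fix hn hg e; rewrite (negbTE hz).
  have h2 : ~~ (0 < (u z : nat) < n).
    apply/negP => hm; have := hfix _ hm => /perm_inj e; by rewrite e eqxx in h1.
  have := ltn_ord z; have := ltn_ord (u z); ordnat; lia.
apply/permP => z; apply: ord_inj; rewrite /W tpermE' -!(inj_eq (@ord_inj _)) /=.
have hz := ltn_ord z.
case: (boolP (0 < (z : nat) < n)) => hm.
  rewrite hfix //; elim_ifs; rewrite /=; lia.
rewrite key //; elim_ifs; rewrite /=; lia.
Qed.

Lemma rem_step n (u : 'S_n.+1) k : 0 < n -> u k != k -> ninv u < ninv (rmv u k) ->
  bruhat_step u (rmv u k).
Proof.
move=> hn hk hl; exists (tperm k (u k)); split; first by apply: (tperm_refl hn); rewrite eq_sym.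
by split => //; rewrite !coxlenE.
Qed.

Lemma toW n (hn : 0 < n) m : forall (u : 'S_n.+1), Dgood u -> #|Mid n :\: Fix u| = m ->
  bruhat u (W n) /\ ninv u + m <= ninv (W n).
Proof.
elim: m => [|m IH] u hg hm.
  move/eqP: hm; rewrite cards_eq0 setD_eq0 => hs.
  by rewrite (Dgood_W_eq hn hg hs) addn0; split => //; apply: rt_refl.
have : 0 < #|Mid n :\: Fix u| by rewrite hm.
rewrite card_gt0 => /set0Pn [k]; rewrite inE in_Mid in_Fix => /andP [hyk hk].
have [hl hg'] := lemR hg hk hyk.
have hm' : #|Mid n :\: Fix (rmv u k)| = m.
  rewrite (FixRem hg hk hyk) setDUr.
  have : k \in Mid n :\: Fix u by rewrite inE in_Mid in_Fix hyk hk.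
  move=> hin; move: hm; rewrite (cardsD1 k) hin add1n => -[<-].
  apply: eq_card => z; rewrite !inE; by case: (z != k); case: (u z != z); case: (0 < (z : nat)); case: ((z : nat) < n).
have [hb hle] := IH _ hg' hm'.
split; first by apply: rt_trans hb; apply: rt_step; apply: rem_step.
lia.
Qed.


Definition xof n (pi : 'S_n) : 'S_n.+1 := weval (map pi (enum 'I_n)).

Lemma xw_uniq n (pi : 'S_n) : uniq (map pi (enum 'I_n)).
Proof. by rewrite (map_inj_uniq perm_inj) enum_uniq. Qed.

Lemma xw_all n (pi : 'S_n) j : j \in map pi (enum 'I_n).
Proof. by apply/mapP; exists ((pi^-1)%g j); rewrite ?mem_enum ?permKV. Qed.

Lemma Dg_x n (pi : 'S_n) : Dgood (xof pi).
Proof. move=> i hi; exact: (D_word (i := Ordinal hi) (xw_uniq pi) (xw_all pi _)). Qed.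

Lemma Fix_x n (pi : 'S_n) : 0 < n -> Fix (xof pi) = set0.
Proof.
move=> hn; apply/setP => z; rewrite in_Fix inE.
by rewrite (negbTE (fix_word hn (xw_uniq pi) (xw_all pi) z)).
Qed.

Lemma inv_x n (pi : 'S_n) : ninv (xof pi) = n.
Proof.
apply/eqP; rewrite eqn_leq; apply/andP; split.
  by have := inv_weval (map pi (enum 'I_n)); rewrite size_map size_enum_ord.
have [t [ht hs]] := expr_inv (xof pi).
rewrite -hs -{1}(size_enum_ord n); apply: uniq_leq_size; first exact: enum_uniq.
move=> j _; apply/negPn/negP => hj.
have := D_word0 hj; rewrite ht (Dg_x pi (ltn_ord j)) //.
Qed.

Lemma size_wword n : size (wword n) = n + n.-1.
Proof. by rewrite /wword size_cat size_enum_ord size_behead size_rev size_enum_ord. Qed.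

Lemma Fix_W n : 0 < n -> Fix (W n) = Mid n.
Proof.
move=> hn; apply/setP => z; rewrite in_Fix in_Mid /W tpermE' -!(inj_eq (@ord_inj _)) /=.
have := ltn_ord z; elim_ifs; rewrite /=; lia.
Qed.

Lemma inv_W n : 0 < n -> ninv (W n) = n + n.-1.
Proof.
move=> hn; apply/eqP; rewrite eqn_leq; apply/andP; split.
  by have := inv_weval (wword n); rewrite size_wword (wword_tperm hn).
have [_ h] := @toW n hn _ (xof 1%g) (@Dg_x n 1%g) erefl.
by move: h; rewrite Fix_x // setD0 card_Mid // inv_x.
Qed.

Definition Int n (pi : 'S_n) (u : 'S_n.+1) := bruhat (xof pi) u /\ bruhat u (W n).

Lemma Int_Dgood n (pi : 'S_n) u : 0 < n -> Int pi u -> Dgood u.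
Proof.
move=> hn [h1 h2] i hi.
have := D_bruhat i h1; have := D_bruhat i h2; rewrite (Dg_x pi hi) (Dg_W hi); lia.
Qed.

Lemma Step0 n (u v : 'S_n.+1) a b : 0 < n -> Dgood u -> Dgood v -> v = (u * tperm a b)%g -> a != b ->
  (Fix v \subset Fix u) \/ (exists k : 'I_n.+1, [/\ 0 < (k : nat) < n, u k != k & v = rmv u k]).
Proof.
move=> hn hu hv ev hab.
have hvz z : v z = tperm a b (u z) by rewrite ev permM.
case: (eqVneq (u a) b) => hua; case: (eqVneq (u b) a) => hub.
- exfalso.
  have va : v a = a by rewrite hvz hua tpermR.
  have vb : v b = b by rewrite hvz hub tpermL.
  have := Dg_fix hn hv va; have := Dg_fix hn hv vb.
  case: (ltngtP a b) => h.
  + have := NoTwo hu h hua hub; lia.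
  + have := NoTwo hu h hub hua; lia.
  + by move/ord_inj: h => h; rewrite h eqxx in hab.
- right; exists a; split.
  + by apply: (Dg_fix hn hv); rewrite hvz hua tpermR.
  + by rewrite hua eq_sym.
  + by rewrite ev /rmv hua.
- right; exists b; split.
  + by apply: (Dg_fix hn hv); rewrite hvz hub tpermL.
  + by rewrite hub.
  + by rewrite ev /rmv hub tpermC.
- left; apply/subsetP => z; rewrite !in_Fix hvz tpermE'.
  case: (eqVneq (u z) a) => [e|ne1].
    move/eqP => ezb; by rewrite ezb e eqxx in hub.
  case: (eqVneq (u z) b) => [e|ne2] //.
  move/eqP => eza; by rewrite eza e eqxx in hua.
Qed.

Lemma card_FixRem n (y : 'S_n.+1) (k : 'I_n.+1) : Dgood y -> 0 < (k : nat) < n -> y k != k ->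
  #|Fix (rmv y k)| = #|Fix y|.+1.
Proof.
move=> hg hk hyk; rewrite (FixRem hg hk hyk) cardsU1 in_Fix hyk.
by rewrite add1n.
Qed.

Lemma E_count n (pi : 'S_n) (u v : 'S_n.+1) : 0 < n -> bruhat u v -> Int pi u -> Int pi v ->
  #|Fix v| + ninv u <= #|Fix u| + ninv v.
Proof.
move=> hn h; elim: h => [y z hs|y|y m z h1 IH1 h2 IH2] hy hz.
- have [t [ht [ez hl]]] := hs; rewrite !coxlenE in hl.
  have [a [b [hab et]]] := refl_tperm ht; rewrite et in ez.
  case: (Step0 hn (Int_Dgood hn hy) (Int_Dgood hn hz) ez hab) => [hsub|[k [hk hyk ev]]].
    by have := subset_leq_card hsub; lia.
  by rewrite ev (card_FixRem (Int_Dgood hn hy) hk hyk) -ev; lia.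
- lia.
- have hm : Int pi m.
    split; first exact: rt_trans hy.1 h1.
    exact: rt_trans h2 hz.2.
  have := IH1 hy hm; have := IH2 hm hz; lia.
Qed.

Lemma F_len n (pi : 'S_n) (u : 'S_n.+1) : 0 < n -> Int pi u -> ninv u = n + #|Fix u|.
Proof.
move=> hn hu.
have hx : Int pi (xof pi) by split; [apply: rt_refl | exact: rt_trans hu.1 hu.2].
have hw : Int pi (W n) by split; [exact: rt_trans hu.1 hu.2 | apply: rt_refl].
have e1 := E_count hn hu.1 hx hu; have e2 := E_count hn hu.2 hu hw.
move: e1 e2; rewrite Fix_x // cards0 inv_x Fix_W // card_Mid // inv_W //; lia.
Qed.

Lemma G_step n (pi : 'S_n) (u v : 'S_n.+1) : 0 < n -> Int pi u -> Int pi v -> bruhat_step u v ->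
  exists k : 'I_n.+1, [/\ 0 < (k : nat) < n, u k != k & v = rmv u k].
Proof.
move=> hn hu hv [t [ht [ez hl]]]; rewrite !coxlenE in hl.
have [a [b [hab et]]] := refl_tperm ht; rewrite et in ez.
case: (Step0 hn (Int_Dgood hn hu) (Int_Dgood hn hv) ez hab) => [hsub|//].
have := subset_leq_card hsub; move: hl; rewrite (F_len hn hu) (F_len hn hv); lia.
Qed.

Lemma Fix_mono n (pi : 'S_n) (u v : 'S_n.+1) : 0 < n -> bruhat u v -> Int pi u -> Int pi v ->
  Fix u \subset Fix v.
Proof.
move=> hn h; elim: h => [y z hs|y|y m z h1 IH1 h2 IH2] hy hz.
- have [k [hk hyk ->]] := G_step hn hy hz hs.
  by rewrite (FixRem (Int_Dgood hn hy) hk hyk) subsetUr.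
- by [].
- have hm : Int pi m.
    split; first exact: rt_trans hy.1 h1.
    exact: rt_trans h2 hz.2.
  exact: subset_trans (IH1 hy hm) (IH2 hm hz).
Qed.

Definition Qp n (x u : 'S_n.+1) := forall z, u z != z -> exists m,
  [/\ 0 < m, u z = (x ^+ m)%g z & forall m', 0 < m' < m -> u ((x ^+ m')%g z) = (x ^+ m')%g z].

Lemma Q_self n (x : 'S_n.+1) : Qp x x.
Proof. by move=> z _; exists 1; split; rewrite ?expg1 //; lia. Qed.

Lemma expD_app n (x : 'S_n.+1) a b z : (x ^+ (a + b))%g z = (x ^+ b)%g ((x ^+ a)%g z).
Proof. by rewrite expgD permM. Qed.

Lemma Q_rmv n (x u : 'S_n.+1) k : Qp x u -> u k != k -> Qp x (rmv u k).
Proof.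
move=> hq hk.
have rz z : rmv u k z = tperm k (u k) (u z) by rewrite /rmv permM.
have fixr p : u p = p -> rmv u k p = p.
  move=> hp.
  have h1 : k != p by apply/negP => /eqP e; rewrite e hp eqxx in hk.
  have h2 : u k != p.
    apply/negP => /eqP e; have : u k = u p by rewrite e hp.
    by move/perm_inj => e2; rewrite e2 hp eqxx in hk.
  by rewrite rz hp tpermD.
have fixnk p : u p = p -> p != k by move=> hp; apply/negP => /eqP e; rewrite -e hp eqxx in hk.
move=> z hz.
case: (eqVneq z k) => [e|hzk]; first by rewrite e rz tpermR eqxx in hz.
case: (eqVneq (u z) k) => [e|ne].
- have hz' : u z != z by rewrite e eq_sym.
  have [m1 [hm1 e1 f1]] := hq z hz'.
  have [m2 [hm2 e2 f2]] := hq k hk.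
  have e1' : (x ^+ m1)%g z = k := etrans (esym e1) e.
  exists (m1 + m2); split; first lia.
    by rewrite rz e tpermL e2 expD_app e1'.
  move=> m' hm'.
  case: (ltngtP m' m1) => h.
  + by apply: fixr; apply: f1; lia.
  + have -> : m' = m1 + (m' - m1) by lia.
    rewrite expD_app e1'; apply: fixr; apply: f2; lia.
  + by rewrite h e1' rz tpermR.
- have hne : u z != u k by rewrite (inj_eq perm_inj).
  have ez : rmv u k z = u z by rewrite rz tpermD // eq_sym.
  have hz' : u z != z by rewrite -ez.
  have [m [hm e1 f1]] := hq z hz'.
  exists m; split => //; first by rewrite ez.
  by move=> m' hm'; apply: fixr; apply: f1.
Qed.

Lemma Q_inj n (x u v : 'S_n.+1) : Qp x u -> Qp x v -> Fix u = Fix v -> u = v.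
Proof.
move=> hu hv hf; apply/permP => z.
case: (eqVneq (u z) z) => [e|ne].
  have : z \in Fix v by rewrite -hf in_Fix e.
  by rewrite in_Fix e => /eqP ->.
have ne' : v z != z by rewrite -in_Fix -hf in_Fix.
have [m1 [h1 e1 f1]] := hu z ne.
have [m2 [h2 e2 f2]] := hv z ne'.
case: (ltngtP m1 m2) => h.
- exfalso; have := f2 m1 (introT andP (conj h1 h)); rewrite -e1 => e.
  have : u z \in Fix u by rewrite hf in_Fix e.
  rewrite in_Fix (inj_eq perm_inj); by rewrite (negbTE ne).
- exfalso; have := f1 m2 (introT andP (conj h2 h)); rewrite -e2 => e.
  have : v z \in Fix v by rewrite -hf in_Fix e.
  rewrite in_Fix (inj_eq perm_inj); by rewrite (negbTE ne').
- by rewrite e1 e2 h.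
Qed.

Lemma Q_Int n (pi : 'S_n) (u : 'S_n.+1) : 0 < n -> Int pi u -> Qp (xof pi) u.
Proof.
move=> hn [h1 h2]; move: h2; have := clos_rt_rtn1 _ _ _ _ h1.
elim=> [|y z hs hyz IH] hzw; first exact: Q_self.
have hxy : bruhat (xof pi) y by apply: clos_rtn1_rt.
have hyw : bruhat y (W n) by apply: rt_trans hzw; apply: rt_step.
have hz : Int pi z by split => //; apply: rt_trans hxy (rt_step _ _ _ _ hs).
have [k [hk hyk ->]] := G_step hn (conj hxy hyw) hz hs.
exact: Q_rmv (IH hyw) hyk.
Qed.

Lemma Build n (hn : 0 < n) (x : 'S_n.+1) m : forall (y : 'S_n.+1) (C : {set 'I_n.+1}),
  Dgood y -> Qp x y -> Fix y \subset C -> C \subset Mid n -> #|C :\: Fix y| = m ->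
  exists y', [/\ bruhat y y', Dgood y', Qp x y' & Fix y' = C].
Proof.
elim: m => [|m IH] y C hg hq hs hC hm.
  move/eqP: hm; rewrite cards_eq0 setD_eq0 => hs'.
  exists y; split => //; first exact: rt_refl.
  by apply/eqP; rewrite eqEsubset hs hs'.
have : 0 < #|C :\: Fix y| by rewrite hm.
rewrite card_gt0 => /set0Pn [k]; rewrite inE in_Fix => /andP [hyk hkC].
have hk : 0 < (k : nat) < n by rewrite -in_Mid; apply: (subsetP hC).
have [hl hg'] := lemR hg hk hyk.
have hF := FixRem hg hk hyk.
have hs' : Fix (rmv y k) \subset C by rewrite hF subUset sub1set hkC hs.
have hm' : #|C :\: Fix (rmv y k)| = m.
  move: hm; rewrite hF (cardsD1 k (C :\: Fix y)) inE in_Fix hyk hkC add1n => -[<-].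
  apply: eq_card => z; rewrite !inE.
  by case: (z == k); case: (y z == z); case: (z \in C).
have [y' [hb hg'' hq' hf']] := IH _ _ hg' (Q_rmv hq hyk) hs' hC hm'.
exists y'; split => //.
by apply: rt_trans hb; apply: rt_step; apply: rem_step.
Qed.


Lemma braid n (j j1 : 'I_n) : (j1 : nat) = (j : nat).+1 ->
  (gen j * (gen j1 * gen j) = gen j1 * (gen j * gen j1))%g.
Proof.
move=> hj; apply/permP => z; apply: ord_inj; rewrite !permM !gen_val.
rewrite hj; elim_ifs; lia.
Qed.

Lemma noncomm n (j j1 : 'I_n) : (j1 : nat) = (j : nat).+1 ->
  (gen j * gen j1)%g <> (gen j1 * gen j)%g.
Proof.
move=> hj e; have := congr1 (fun p : 'S_n.+1 => (p (widen_ord (leqnSn n) j) : nat)) e.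
rewrite /= !permM !gen_val /= hj; elim_ifs; lia.
Qed.

Lemma filt_comm n (j j1 : 'I_n) t1 t2 : (j1 : nat) = (j : nat).+1 -> comm_move t1 t2 ->
  filter (fun c => (c == j) || (c == j1)) t1 = filter (fun c => (c == j) || (c == j1)) t2.
Proof.
move=> hj [a [b [i [i' [hc [-> ->]]]]]].
rewrite !filter_cat; congr (_ ++ _); congr (_ ++ _) => /=.
have hjj : j != j1 by rewrite -(inj_eq (@ord_inj _)); lia.
case: (eqVneq i i') => [->//|hii].
case: (boolP ((i == j) || (i == j1))) => hi; case: (boolP ((i' == j) || (i' == j1))) => hi' //.
exfalso; move: hi hi' hii hc.
case/orP => /eqP ->; case/orP => /eqP ->; rewrite ?eqxx //.
- by move=> _; apply: noncomm.
- by move=> _ /esym; apply: noncomm.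
Qed.

Lemma filt_rt n (j j1 : 'I_n) t1 t2 : (j1 : nat) = (j : nat).+1 ->
  clos_refl_trans _ (@comm_move n) t1 t2 ->
  filter (fun c => (c == j) || (c == j1)) t1 = filter (fun c => (c == j) || (c == j1)) t2.
Proof.
move=> hj; elim => [x y /(filt_comm hj) //| x //| x y z _ e1 _ e2]; by rewrite e1 e2.
Qed.

Lemma nonFC n (u : 'S_n.+1) (j j1 : 'I_n) a b : (j1 : nat) = (j : nat).+1 ->
  reduced_expr u (a ++ [:: j; j1; j] ++ b) -> ~ fully_commutative u.
Proof.
move=> hj [hw hs] hfc.
have hr2 : reduced_expr u (a ++ [:: j1; j; j1] ++ b).
  split; last by rewrite -hs !size_cat.
  by rewrite -hw !weval_cat /= !mulg1 (braid hj).
have := filt_rt hj (hfc _ _ (conj hw hs) hr2).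
rewrite !filter_cat => /eqP; rewrite eqseq_cat // => /andP [_].
rewrite eqseq_cat /= ?eqxx ?orbT //= => /andP [/eqP e _].
case: e => e1; rewrite e1 in hj; lia.
Qed.

Lemma dstep n (u : 'S_n.+1) (i : 'I_n) :
  (u (lift ord0 i) : nat) < u (widen_ord (leqnSn n) i) -> (ninv (gen i * u)%g).+1 = ninv u.
Proof.
move=> hi; set u' := (gen i * u)%g.
have h' : (u' (widen_ord (leqnSn n) i) : nat) < u' (lift ord0 i).
  by rewrite !permM /gen tpermL tpermR.
have e := inv_adj h'.
have eu : (gen i * u')%g = u by rewrite mulgA genK mul1g.
by rewrite -eu e.
Qed.

Lemma red_cons n (u : 'S_n.+1) (i : 'I_n) t :
  (u (lift ord0 i) : nat) < u (widen_ord (leqnSn n) i) ->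
  reduced_expr (gen i * u)%g t -> reduced_expr u (i :: t).
Proof.
move=> hi [hw hs]; split.
  by rewrite weval_cons hw mulgA genK mul1g.
by rewrite /= hs !coxlenE dstep.
Qed.

Lemma gen_app n (i : 'I_n) (z : 'I_n.+1) :
  ((z : nat) != i) -> ((z : nat) != (i : nat).+1) -> gen i z = z.
Proof. by move=> h1 h2; apply: ord_inj; rewrite gen_val (negbTE h1) (negbTE h2). Qed.

Lemma gen_lo n (i : 'I_n) (z : 'I_n.+1) : (z : nat) = i -> (gen i z : nat) = (i : nat).+1.
Proof. by move=> h; rewrite gen_val h eqxx. Qed.

Lemma gen_hi n (i : 'I_n) (z : 'I_n.+1) : (z : nat) = (i : nat).+1 -> (gen i z : nat) = i.
Proof. by move=> h; rewrite gen_val h eqxx; case: eqP => //; lia. Qed.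

Lemma wid_val n (i : 'I_n) : (widen_ord (leqnSn n) i : nat) = i.
Proof. by []. Qed.

Lemma lift_val n (i : 'I_n) : (lift ord0 i : nat) = (i : nat).+1.
Proof. by rewrite /= /bump leq0n. Qed.

Lemma ord_of n (z : nat) (h : z < n.+1) (y : 'I_n.+1) : (y : nat) = z -> y = Ordinal h.
Proof. by move=> e; apply: ord_inj. Qed.

Lemma pat321 n (u : 'S_n.+1) (p q r : 'I_n.+1) :
  (p : nat) < q -> (q : nat) < r -> (u r : nat) < u q -> (u q : nat) < u p ->
  exists a b (j j1 : 'I_n), (j1 : nat) = (j : nat).+1 /\ reduced_expr u (a ++ [:: j; j1; j] ++ b).
Proof.
have [k hk] : exists k, (r : nat) - p = k by eexists.
elim: k u p q r hk => [|k IH] u p q r hk hpq hqr h1 h2; first lia.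
have hrn := ltn_ord r.
case: (ltnP q.+1 r) => hgap.
-
  have hr1 : (r : nat).-1 < n by lia.
  set i : 'I_n := Ordinal hr1.
  have hwi : (widen_ord (leqnSn n) i : nat) = (r : nat).-1 by [].
  have hli : lift ord0 i = r by apply: ord_inj; rewrite lift_val /=; lia.
  set R1 := widen_ord (leqnSn n) i.
  case: (ltnP (u R1) (u q)) => hc.
    apply: (IH u p q R1) => //; rewrite ?hwi; lia.
  have hc' : (u r : nat) < u R1 by lia.
  have hd : (u (lift ord0 i) : nat) < u (widen_ord (leqnSn n) i) by rewrite hli.
  set u' := (gen i * u)%g.
  have ep : u' p = u p by rewrite permM gen_app //=; lia.
  have eq_ : u' q = u q by rewrite permM gen_app //=; lia.
  have er : u' R1 = u r by rewrite permM /R1 /gen tpermL hli.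
  have [a [b [j [j1 [hj hred]]]]] : exists a b (j j1 : 'I_n),
      (j1 : nat) = (j : nat).+1 /\ reduced_expr u' (a ++ [:: j; j1; j] ++ b).
    apply: (IH u' p q R1); rewrite ?ep ?eq_ ?er ?hwi; lia.
  exists (i :: a), b, j, j1; split => //.
  exact: red_cons hd hred.
- have er : (r : nat) = q.+1 by lia.
  case: (ltnP p.+1 q) => hgap2.
  +
    have hp1 : (p : nat) < n by lia.
    set i : 'I_n := Ordinal hp1.
    have hwi : widen_ord (leqnSn n) i = p by apply: ord_inj.
    have hp2 : (p : nat).+1 < n.+1 by lia.
    set P1 : 'I_n.+1 := Ordinal hp2.
    have hli : lift ord0 i = P1 by apply: ord_inj; rewrite lift_val.
    case: (ltnP (u q) (u P1)) => hc.
      apply: (IH u P1 q r) => //=; lia.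
    have hc' : (u P1 : nat) < u p by lia.
    have hd : (u (lift ord0 i) : nat) < u (widen_ord (leqnSn n) i) by rewrite hli hwi.
    set u' := (gen i * u)%g.
    have eP : u' P1 = u p by rewrite permM -hli /gen tpermR hwi.
    have eq_ : u' q = u q by rewrite permM gen_app //=; lia.
    have er' : u' r = u r by rewrite permM gen_app //=; lia.
    have [a [b [j [j1 [hj hred]]]]] : exists a b (j j1 : 'I_n),
        (j1 : nat) = (j : nat).+1 /\ reduced_expr u' (a ++ [:: j; j1; j] ++ b).
      apply: (IH u' P1 q r); rewrite ?eP ?eq_ ?er' /=; lia.
    exists (i :: a), b, j, j1; split => //.
    exact: red_cons hd hred.
  +
    have eq1 : (q : nat) = p.+1 by lia.
    have hp1 : (p : nat) < n by lia.
    have hp1' : (p : nat).+1 < n by lia.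
    set j : 'I_n := Ordinal hp1.
    set j1 : 'I_n := Ordinal hp1'.
    have hwj : widen_ord (leqnSn n) j = p by apply: ord_inj.
    have hlj : lift ord0 j = q by apply: ord_inj; rewrite lift_val /=; lia.
    have hwj1 : widen_ord (leqnSn n) j1 = q by apply: ord_inj; rewrite /=; lia.
    have hlj1 : lift ord0 j1 = r by apply: ord_inj; rewrite lift_val /=; lia.
    set u1 := (gen j * u)%g.
    have d1 : (u (lift ord0 j) : nat) < u (widen_ord (leqnSn n) j) by rewrite hlj hwj.
    have u1q : u1 q = u p by rewrite permM -hlj /gen tpermR hwj.
    have u1p : u1 p = u q by rewrite permM -hwj /gen tpermL hlj.
    have u1r : u1 r = u r by rewrite permM gen_app //=; lia.
    set u2 := (gen j1 * u1)%g.
    have d2 : (u1 (lift ord0 j1) : nat) < u1 (widen_ord (leqnSn n) j1) by rewrite hlj1 hwj1 u1q u1r; lia.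
    have u2p : u2 p = u q by rewrite permM gen_app //= ?u1p; lia.
    have u2q : u2 q = u r by rewrite permM -hwj1 /gen tpermL hlj1 u1r.
    set u3 := (gen j * u2)%g.
    have d3 : (u2 (lift ord0 j) : nat) < u2 (widen_ord (leqnSn n) j) by rewrite hlj hwj u2p u2q.
    have [t [ht hs]] := expr_inv u3.
    have r3 : reduced_expr u3 t by split => //; rewrite coxlenE.
    exists [::], t, j, j1; split => //.
    apply: red_cons d1 _; apply: red_cons d2 _; exact: red_cons d3 r3.
Qed.


Definition gm n (i : 'I_n.-1) : 'I_n.+1 := inord (i : nat).+1.

Lemma gm_val n (hn : 0 < n) (i : 'I_n.-1) : (gm i : nat) = (i : nat).+1.
Proof. rewrite /gm inordK //; have := ltn_ord i; lia. Qed.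

Lemma gm_inj n (hn : 0 < n) : injective (@gm n).
Proof. move=> i j e; apply: ord_inj; have := gm_val hn i; have := gm_val hn j; rewrite e; lia. Qed.

Definition fF n (y : 'S_n.+1) : {set 'I_n.-1} := (@gm n) @^-1: Fix y.

Lemma FixE n (hn : 0 < n) (u : 'S_n.+1) : Dgood u -> Fix u = (@gm n) @: fF u.
Proof.
move=> hg; apply/setP => p; apply/idP/imsetP.
  rewrite in_Fix => /eqP e; have := Dg_fix hn hg e => hp.
  have hi : (p : nat).-1 < n.-1 by lia.
  have ep : gm (Ordinal hi) = p by apply: ord_inj; rewrite gm_val //=; lia.
  by exists (Ordinal hi) => //; rewrite inE ep in_Fix e.
by move=> [i]; rewrite inE => hi ->.
Qed.

Lemma boolean n (hn : 0 < n) (pi : 'S_n) : interval_boolean (xof pi) (W n) n.-1.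
Proof.
exists (@fF n); split; [|split].
- move=> A.
  set C := (@gm n) @: A.
  have hC : C \subset Mid n.
    apply/subsetP => _ /imsetP [i _ ->]; rewrite in_Mid gm_val //; have := ltn_ord i; lia.
  have hx0 : Fix (xof pi) \subset C by rewrite Fix_x // sub0set.
  have [y [hb hg hq hf]] := Build hn (@Dg_x n pi) (@Q_self n (xof pi)) hx0 hC erefl.
  exists y; split => //; first exact: (toW hn hg erefl).1.
  apply/setP => i; rewrite inE hf mem_imset //; exact: gm_inj.
- move=> y z hxy hyw hxz hzw e.
  have hy : Int pi y by [].
  have hz : Int pi z by [].
  apply: (Q_inj (Q_Int hn hy) (Q_Int hn hz)).
  by rewrite (FixE hn (Int_Dgood hn hy)) (FixE hn (Int_Dgood hn hz)) e.
- move=> y z hxy hyw hxz hzw.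
  have hy : Int pi y by [].
  have hz : Int pi z by [].
  split.
    by move=> h; apply: preimsetS; apply: Fix_mono h hy hz.
  move=> hs.
  have hs' : Fix y \subset Fix z.
    by rewrite (FixE hn (Int_Dgood hn hy)) (FixE hn (Int_Dgood hn hz)); apply: imsetS.
  have hzm : Fix z \subset Mid n.
    by apply/subsetP => p; rewrite in_Fix in_Mid => /eqP e; apply: Dg_fix hn (Int_Dgood hn hz) e.
  have [y' [hb hg hq hf]] := Build hn (Int_Dgood hn hy) (Q_Int hn hy) hs' hzm erefl.
  by have -> : z = y' by apply: (Q_inj (Q_Int hn hz) hq); rewrite hf.
Qed.

Lemma notFC n (hn : 0 < n) (pi : 'S_n) (y : 'S_n.+1) :
  bruhat (xof pi) y -> y <> xof pi -> bruhat y (W n) -> ~ fully_commutative y.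
Proof.
move=> hxy hne hyw.
have hy : Int pi y by [].
have hg := Int_Dgood hn hy.
have : Fix y != set0.
  apply/negP => /eqP e; apply: hne.
  apply: (Q_inj (Q_Int hn hy) (@Q_self n (xof pi))); by rewrite e Fix_x.
case/set0Pn => k; rewrite in_Fix => /eqP hk.
have hkm := Dg_fix hn hg hk.
have hk1 : (k : nat).-1 < n by lia.
have [p /andP [hp1 hp2]] := Dg_ex hg hk1.
have hpk : p != k by apply/negP => /eqP e; move: hp1; rewrite e; lia.
have hyp : (k : nat) < y p.
  have : y p != y k by rewrite (inj_eq perm_inj).
  rewrite hk -(inj_eq (@ord_inj _)); lia.
have hyk : (y k : nat) = k by rewrite hk.
case: (boolP [exists q : 'I_n.+1, ((k : nat) < q) && ((y q : nat) < k)]).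
  case/existsP => q /andP [hq1 hq2].
  have hpk' : (p : nat) < k by ordnat; lia.
  have h3 : (y q : nat) < y k by rewrite hyk.
  have h4 : (y k : nat) < y p by rewrite hyk.
  have [a [b [j [j1 [hj hred]]]]] := pat321 hpk' hq1 h3 h4.
  exact: nonFC hj hred.
rewrite negb_exists => /forallP hall; exfalso.
set T := [set q : 'I_n.+1 | (k : nat) < q].
have hpT : p \notin T by rewrite inE; ordnat; lia.
have hsub : y @: (p |: T) \subset T.
  apply/subsetP => _ /imsetP [z hz ->]; rewrite inE.
  move: hz; rewrite in_setU1 inE => /orP [/eqP ->|hz] //.
  have := hall z; rewrite hz /= -leqNgt => hle.
  have : y z != y k by rewrite (inj_eq perm_inj) -(inj_eq (@ord_inj _)); lia.
  rewrite -(inj_eq (@ord_inj _)) hyk; lia.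
have := subset_leq_card hsub; rewrite card_imset; last exact: perm_inj.
by rewrite cardsU1 hpT /= add1n ltnn.
Qed.

Theorem mainTheorem10 (n : nat) (hn : 0 < n) (pi : 'S_n) :
  let w := weval (wword n) in
  let x := weval (map pi (enum 'I_n)) in
  [/\ reduced_expr w (wword n),
      bruhat x w,
      interval_boolean x w (coxlen w - coxlen x)
    & forall y : 'S_n.+1, bruhat x y -> y <> x -> bruhat y w ->
        ~ fully_commutative y].
Proof.
move=> w x; rewrite /w /x (wword_tperm hn) -/(xof pi).
split.
- split; first exact: wword_tperm.
  by rewrite coxlenE inv_W // size_wword.
- exact: (toW hn (@Dg_x n pi) erefl).1.
- rewrite !coxlenE inv_W // inv_x.
  have -> : n + n.-1 - n = n.-1 by lia.
  exact: boolean.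
- exact: notFC.
Qed.
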